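(* Let $n\ge 2$. For $a\in\mathbb{R}^{n-1}$ and $\rho>0$ let $$B(a,\rho)=\begin{pmatrix} I & -a\\ -a^T & a^Ta-\rho^2\end{pmatrix}\in\mathbb{S}^n,$$ where $I$ is the $(n-1)\times(n-1)$ identity. Let $G\subseteq\mathbb{Z}^{n-1}\times(0,1/2]$ be such that $a_1\neq a_2$ for every pair of distinct $(a_1,\rho_1),(a_2,\rho_2)\in G$. Then $B(a_1,\rho_1)+B(a_2,\rho_2)\in\mathbb{S}^n_+$ for every distinct $(a_1,\rho_1),(a_2,\rho_2)\in G$; in particular $\mathcal{B}(G)=\{B(a,\rho):(a,\rho)\in G\}$ satisfies Condition (D).
   Context: $\mathbb{S}^n$ denotes the space of real $n\times n$ symmetric matrices and $\mathbb{S}^n_+$ its cone of positive semidefinite matrices. A set $\mathcal{B}\subseteq\mathbb{S}^n$ satisfies Condition (D) if there exist $\alpha_B>0$ $(B\in\mathcal{B})$ with $\alpha_AA+\alpha_BB\in\mathbb{S}^n_+$ for every distinct pair $A,B\in\mathcal{B}$. *)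

(* Defs.v *)
From HB Require Import structures.
From mathcomp Require Import all_boot all_order all_algebra.
Set Implicit Arguments. Unset Strict Implicit. Unset Printing Implicit Defensive.
Import Order.TTheory GRing.Theory Num.Theory.
Local Open Scope ring_scope.

Definition psd (R : realFieldType) (N : nat) (A : 'M[R]_N) : Prop :=
  A^T = A /\ forall x : 'cV[R]_N, 0 <= (x^T *m A *m x) 0 0.

Definition conditionD (R : realFieldType) (N : nat) (Bs : 'M[R]_N -> Prop) : Prop :=
  exists alpha : 'M[R]_N -> R,
    (forall B, Bs B -> 0 < alpha B) /\
    (forall A B, Bs A -> Bs B -> A <> B -> psd (alpha A *: A + alpha B *: B)).

Definition Bmat (R : realFieldType) (k : nat) (a : 'cV[int]_k) (rho : R)
  : 'M[R]_(k + 1) :=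
  let ar := map_mx (fun z : int => z%:~R) a in
  block_mx 1%:M (- ar) (- ar^T) (ar^T *m ar - (rho ^+ 2)%:M).

Definition BG (R : realFieldType) (k : nat) (G : 'cV[int]_k * R -> Prop)
  : 'M[R]_(k + 1) -> Prop :=
  fun M => exists p, G p /\ M = Bmat p.1 p.2.

(* Main.v *)
Require Import Defs.
From HB Require Import structures.
From mathcomp Require Import all_boot all_order all_algebra ring lra zify.
Import Order.TTheory GRing.Theory Num.Theory.
Local Open Scope ring_scope.
Section S.
Variable R : realFieldType.
Lemma eD m n (A B : 'M[R]_(m,n)) i j : (A + B) i j = A i j + B i j. Proof. by rewrite mxE. Qed.
Lemma eN m n (A : 'M[R]_(m,n)) i j : (- A) i j = - A i j. Proof. by rewrite mxE. Qed.
Lemma eB m n (A B : 'M[R]_(m,n)) i j : (A - B) i j = A i j - B i j. Proof. by rewrite eD eN. Qed.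
Lemma eS (a : R) : (a%:M : 'M[R]_1) 0 0 = a. Proof. by rewrite mxE. Qed.
Lemma L1 n (A : 'M[R]_(n,1)) (t : 'M[R]_1) i : (A *m t) i 0 = A i 0 * t 0 0.
Proof. by rewrite mxE big_ord1. Qed.
Lemma L2 n (t : 'cV[R]_1) (B : 'M[R]_(1,n)) j : (t^T *m B) 0 j = t 0 0 * B 0 j.
Proof. by rewrite mxE big_ord1 mxE. Qed.
Lemma dotE k (u v : 'cV[R]_k) : (u^T *m v) 0 0 = \sum_i u i 0 * v i 0.
Proof. by rewrite mxE; apply: eq_bigr => i _; rewrite mxE. Qed.
Lemma quad k (y : 'cV[R]_k) (t : 'cV_1) (P : 'M_k) (u : 'cV_k) (v : 'rV_k) (w : 'M_1) :
 ((col_mx y t)^T *m block_mx P u v w *m col_mx y t) 0 0 = (y^T *m P *m y) 0 0 + (y^T *m u *m t) 0 0 + (t^T *m v *m y) 0 0 + (t^T *m w *m t) 0 0.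
Proof. rewrite tr_col_mx mul_row_block mul_row_col !mulmxDl !mxE. ring. Qed.

Lemma Qform k (b1 b2 y : 'cV[R]_k) (t : 'cV_1) (r1 r2 : R) :
  ((col_mx y t)^T *m block_mx (1%:M + 1%:M) (- b1 - b2) (- b1^T - b2^T)
     (b1^T *m b1 - (r1 ^+ 2)%:M + (b2^T *m b2 - (r2 ^+ 2)%:M)) *m col_mx y t) 0 0
  = \sum_i (2 * (y i 0 * y i 0) - 2 * (t 0 0 * (y i 0 * b1 i 0)) - 2 * (t 0 0 * (y i 0 * b2 i 0))
            + t 0 0 * t 0 0 * (b1 i 0 * b1 i 0) + t 0 0 * t 0 0 * (b2 i 0 * b2 i 0))
    - t 0 0 * t 0 0 * (r1 ^+ 2 + r2 ^+ 2).
Proof.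
rewrite quad mulmxDr mulmx1 mulmxDl eD !L1.
rewrite -[(t^T *m _ *m y)]mulmxA L2 [t^T 0 0]mxE mulmxBr mulmxBl mulmxN mulNmx.
rewrite !eD !eN !eS !dotE.
rewrite (eq_bigr (fun i => y i 0 * b1 i 0) (fun i _ => mulrC (b1 i 0) (y i 0))).
rewrite (eq_bigr (fun i => y i 0 * b2 i 0) (fun i _ => mulrC (b2 i 0) (y i 0))).
rewrite !big_split /= !sumrN -!mulr_sumr.
ring.
Qed.


Lemma int_sq (z : int) : z != 0 -> (1 : R) <= z%:~R * z%:~R.
Proof. move=> h; rewrite -intrM ler1z; lia. Qed.

Lemma psdB k (a1 a2 : 'cV[int]_k) (r1 r2 : R) :
  a1 <> a2 -> 0 < r1 <= 1/2 -> 0 < r2 <= 1/2 -> psd (Bmat a1 r1 + Bmat a2 r2).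
Proof.
move=> ne /andP[h1 h1'] /andP[h2 h2']; rewrite /psd /Bmat add_block_mx; split.
  by rewrite tr_block_mx !linearD /= !linearN /= !trmxK trmx1 !trmx_mul !trmxK ?linearB /= ?tr_scalar_mx.
move=> x; rewrite -(vsubmxK x) Qform.
set y := usubmx x; set t := dsubmx x; set b1 := map_mx _ a1; set b2 := map_mx _ a2.
set tau := t 0 0.
have [i0 hi0] : exists i0, a1 i0 0 != a2 i0 0.
  apply/existsP; apply: contra_notT ne => /existsPn h; apply/matrixP => i j.
  by rewrite (ord1 j); apply/eqP; move: (h i); rewrite negbK.
have hS : 1 <= \sum_i (b1 i 0 - b2 i 0) * (b1 i 0 - b2 i 0).
  rewrite (bigD1 i0) //=.
  have e1 : 1 <= (b1 i0 0 - b2 i0 0) * (b1 i0 0 - b2 i0 0).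
    by rewrite /b1 /b2 !mxE -intrB; apply: int_sq; rewrite subr_eq0.
  have e2 : 0 <= \sum_(i | i != i0) (b1 i 0 - b2 i 0) * (b1 i 0 - b2 i 0).
    by apply: sumr_ge0 => i _; rewrite -expr2 sqr_ge0.
  lra.
have hL : \sum_i (2 * (y i 0 * y i 0) - 2 * (tau * (y i 0 * b1 i 0)) - 2 * (tau * (y i 0 * b2 i 0))
            + tau * tau * (b1 i 0 * b1 i 0) + tau * tau * (b2 i 0 * b2 i 0))
   >= tau * tau / 2 * \sum_i (b1 i 0 - b2 i 0) * (b1 i 0 - b2 i 0).
  rewrite mulr_sumr; apply: ler_sum => i _.
  rewrite -subr_ge0.
  set z := (2 * y i 0 - tau * (b1 i 0 + b2 i 0)).
  have -> : 2 * (y i 0 * y i 0) - 2 * (tau * (y i 0 * b1 i 0)) - 2 * (tau * (y i 0 * b2 i 0)) +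
    tau * tau * (b1 i 0 * b1 i 0) + tau * tau * (b2 i 0 * b2 i 0) -
    tau * tau / 2 * ((b1 i 0 - b2 i 0) * (b1 i 0 - b2 i 0)) = z * z / 2.
    by rewrite /z; field.
  by rewrite -expr2 divr_ge0 ?sqr_ge0.
have ht := sqr_ge0 tau; rewrite expr2 in ht.
set S := \sum_i _ in hS hL.
set Q := \sum_i _ in hL *.
set T := tau * tau in ht hL *.
have r : r1 ^+ 2 + r2 ^+ 2 <= 1 / 2 by rewrite !expr2; nra.
have e1 : T * (r1 ^+ 2 + r2 ^+ 2) <= T * (1 / 2) by apply: ler_wpM2l.
have e2 : T * (1 / 2) <= T / 2 * S.
  rewrite -subr_ge0 (_ : _ - _ = T / 2 * (S - 1)); last by field.
  by apply: mulr_ge0; [apply: divr_ge0 | rewrite subr_ge0].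
lra.
Qed.

End S.

Theorem mainTheorem3 (R : realFieldType) (n : nat) (hn : (2 <= n)%N)
  (G : 'cV[int]_(n.-1) * R -> Prop)
  (hG : forall p, G p -> 0 < p.2 <= 1 / 2)
  (hinj : forall p q, G p -> G q -> p <> q -> p.1 <> q.1) :
  (forall p q, G p -> G q -> p <> q -> psd (Bmat p.1 p.2 + Bmat q.1 q.2))
  /\ conditionD (BG G).
Proof.
have H : forall p q, G p -> G q -> p <> q -> psd (Bmat p.1 p.2 + Bmat q.1 q.2).
  move=> p q Gp Gq pq; apply: psdB; [exact: hinj | exact: hG | exact: hG].
split=> //; exists (fun _ => 1); split=> [B _|A B [p [Gp ->]] [q [Gq ->]] AB]; first exact: ltr01.
rewrite !scale1r; apply: H => // pq; apply: AB; by rewrite pq.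
Qed.
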